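(* There is an infinite set $A_0\subset\mathbb{N}_0$ such that $A_0^2+A_0=\mathbb{N}_0$ and $$\liminf_{X\to\infty}\frac{A_0(X)}{(X\log X)^{1/3}}<\infty.$$
   Context: $\mathbb{N}_0$ is the set of nonnegative integers; $A_0^2=\{ab:a,b\in A_0\}$, $A_0^2+A_0=\{x+y:x\in A_0^2,y\in A_0\}$; $A_0(X)=|A_0\cap[1,X]|$. *)

(* Defs.v *)
From Stdlib Require Import Reals.
From mathcomp Require Import ssreflect ssrbool ssrnat seq.

(* A0(X) = |A0 ∩ [1, X]| for a real X. Every integer n with 1 <= n <= X
   satisfies n < up X, so it lies in iota 1 (Z.to_nat (up X)). *)
Definition counting (A : nat -> bool) (X : R) : nat :=
  count (fun n => A n && (if Rle_dec (INR n) X then true else false))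
        (iota 1 (Z.to_nat (up X))).

Definition infinite_set (A : nat -> bool) : Prop :=
  forall m : nat, exists n : nat, (m <= n)%nat /\ A n.

Definition prod_sum_covers (A : nat -> bool) : Prop :=
  forall n : nat, exists a b c : nat, A a /\ A b /\ A c /\ n = (a * b + c)%nat.

(* Main.v *)
Require Import Defs.
From Stdlib Require Import Reals Lra ClassicalEpsilon.
From mathcomp Require Import ssreflect ssrbool ssrnat seq.
From mathcomp Require Import all_boot zify.
Delimit Scope R_scope with R.


Fixpoint ee (j : nat) : nat := if j is j'.+1 then (3 * ee j').-1 else 1.
Definition uu j := 2 ^ ee j.

Lemma ee_ge1 j : 1 <= ee j.
Proof. elim: j => [//|j IH] /=; lia. Qed.

Lemma ee_lt j : ee j < ee j.+1.
Proof. have := ee_ge1 j; rewrite /=; lia. Qed.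

Lemma ee_mono i j : i < j -> ee i.+1 <= ee j.
Proof.
elim: j => [//|j IH]; rewrite ltnS leq_eqVlt => /orP [/eqP ->//|/IH h].
have := ee_lt j; lia.
Qed.

Lemma ee_ge j : j < ee j.
Proof. elim: j => [//|j IH]; have := ee_lt j; lia. Qed.

Definition phase (j x : nat) : Prop :=
  (uu j <= x < 4 * uu j) \/
  exists k, k <= 2 * ee j /\ 2 ^ k <= x <= 2 ^ k + 2 ^ k %/ uu j.

Lemma cover_phase j n : 3 * uu j <= n -> n < 3 * uu j.+1 ->
  exists a b c, phase j a /\ phase j b /\ phase j c /\ n = a * b + c.
Proof.
move=> h1 h2.
set e := ee j. set u := uu j.
have he := ee_ge1 j. fold e in he.
have hu2 : 2 <= u.
  by rewrite /u -/e; have := leq_exp2l 1 e (isT : 1 < 2); rewrite expn1 => ->.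
have hu0 : 0 < u by lia.
have hnext : 3 * uu j.+1 <= u * 2 ^ (2 * e).+1.
  rewrite /uu /= -/e /u -/e -expnD.
  have -> : (e + (2 * e).+1) = ((3 * e).-1 + 2) by lia.
  rewrite expnD; have := expn_gt0 2 (3 * e).-1; lia.
set m := n - 2 * u.
have hm1 : u <= m by lia.
have hm2 : m < u * 2 ^ (2 * e).+1 by lia.
set q := m %/ u.
have hq1 : 0 < q by rewrite /q leq_divRL // mul1n.
have hq2 : q < 2 ^ (2 * e).+1 by rewrite /q ltn_divLR // mulnC.
set k := trunc_log 2 q.
have [hk1 hk2] : 2 ^ k <= q /\ q < 2 ^ k.+1.
  by have := trunc_log_bounds (isT : 1 < 2) hq1; rewrite -/k => /andP.
have hk : k <= 2 * e.
  have : 2 ^ k < 2 ^ (2 * e).+1 by lia.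
  by rewrite ltn_exp2l.
set P := 2 ^ k.
have hP : 0 < P by rewrite expn_gt0.
have hP2 : 2 ^ k.+1 = 2 * P by rewrite expnS.
set b := m %/ P.
have hqu : q * u <= m := leq_divM m u.
have hqu2 : m < q.+1 * u := ltn_ceil m hu0.
have hb1 : u <= b.
  rewrite /b leq_divRL //. have : u * P <= u * q by rewrite leq_mul2l hk1 orbT. lia.
have hb2 : b < 2 * u.
  rewrite /b ltn_divLR //. have : q.+1 * u <= (2 * P) * u by rewrite leq_mul2r; lia. lia.
have hb0 : 0 < b by lia.
set a := m %/ b.
have hbP : b * P <= m := leq_divM m P.
have hbP2 : m < b.+1 * P := ltn_ceil m hP.
have hab : a * b <= m := leq_divM m b.
have ha1 : P <= a by rewrite /a leq_divRL // mulnC.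
have ha2 : a - P <= P %/ u.
  rewrite leq_divRL //.
  have g1 : (a - P) * u <= (a - P) * b by rewrite leq_mul2l hb1 orbT.
  have g2 : (a - P) * b = a * b - P * b by rewrite mulnBl.
  lia.
set c := 2 * u + m %% b.
have hc : m %% b < b := ltn_pmod m hb0.
exists a, b, c; split; [|split; [|split]].
- right; exists k; split => //; rewrite -/P; apply/andP; split => //.
  change (a <= P + P %/ u); lia.
- left; rewrite -/u; lia.
- left; rewrite -/u /c; lia.
- have := divn_eq m b; rewrite -/a /c; lia.
Qed.

Lemma find_phase_aux J N : 6 <= N -> N < 3 * uu J ->
  exists j, 3 * uu j <= N < 3 * uu j.+1.
Proof.
elim: J => [|J IH] hN hJ; first by move: hJ; rewrite /uu /=; lia.
case: (leqP (3 * uu J) N) => h; first by exists J; lia.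
exact: IH.
Qed.

Lemma find_phase n : 6 <= n -> exists j, 3 * uu j <= n < 3 * uu j.+1.
Proof.
move=> hn; apply: (find_phase_aux n) => //.
rewrite /uu; have := ltn_expl (ee n) (isT : 1 < 2); have := ee_ge n; lia.
Qed.


Definition Pn (n : nat) : Prop := n < 8 \/ exists j, phase j n.
Definition A0 (n : nat) : bool :=
  if excluded_middle_informative (Pn n) then true else false.

Lemma A0P n : A0 n <-> Pn n.
Proof. by rewrite /A0; case: excluded_middle_informative. Qed.

Lemma A0_cover : prod_sum_covers A0.
Proof.
move=> n.
have P0 : A0 0 by apply/A0P; left.
case: (ltnP n 6) => hn.
  by exists 0, 0, n; split => //; split => //; split => //; apply/A0P; left; lia.
have [j hj] := find_phase n hn.
have /andP [h1 h2] := hj.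
have [a [b [c [ha [hb [hc ->]]]]]] := cover_phase j n h1 h2.
exists a, b, c; split; [|split; [|split]] => //; apply/A0P; right; by exists j.
Qed.

Lemma A0_inf : infinite_set A0.
Proof.
move=> m; exists (uu m); split.
  rewrite /uu; have := ltn_expl (ee m) (isT : 1 < 2); have := ee_ge m.
  move: (2 ^ ee m) => X; lia.
apply/A0P; right; exists m; left; rewrite /uu; have := expn_gt0 2 (ee m).
move: (2 ^ ee m) => X; lia.
Qed.

Lemma count_or_le (T : Type) (a b : pred T) s :
  count (fun x => a x || b x) s <= count a s + count b s.
Proof.
have h := count_predUI a b s.
have e : count (predU a b) s = count (fun x => a x || b x) s by apply: eq_count.
lia.
Qed.

Lemma count_has_le (T : Type) (P : nat -> pred T) (r : seq nat) s :
  count (fun x => has (fun k => P k x) r) s <= \sum_(k <- r) count (P k) s.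
Proof.
elim: r => [|k r IH] /=; first by rewrite big_nil count_pred0.
rewrite big_cons.
have h := count_or_le _ (P k) (fun x => has (P^~ x) r) s. apply: (leq_trans h). by rewrite leq_add2l.
Qed.

Lemma count_int_le lo hi s : uniq s ->
  count (fun x => lo <= x <= hi) s <= hi.+1 - lo.
Proof.
move=> us; rewrite -size_filter -(size_iota lo (hi.+1 - lo)).
apply: uniq_leq_size; first exact: filter_uniq.
move=> x; rewrite mem_filter mem_iota /= => /andP [/andP [h1 h2] _]; lia.
Qed.

Lemma count_lt_le B s : uniq s -> count (fun x => x < B) s <= B.
Proof.
move=> us; rewrite -size_filter -(size_iota 0 B).
apply: uniq_leq_size; first exact: filter_uniq.
move=> x; rewrite mem_filter mem_iota /= size_iota => /andP [h _]; lia.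
Qed.

Lemma sum_win_le d K : 0 < d ->
  (\sum_(0 <= k < K) (2 ^ k %/ d).+1) * d < 2 ^ K + K * d.
Proof.
move=> hd; elim: K => [|K IH]; first by rewrite big_geq.
rewrite big_nat_recr //= mulnDl expnS.
have := leq_divM (2 ^ K) d. lia.
Qed.


Lemma p2_le a b : a <= b -> 2 ^ a <= 2 ^ b.
Proof. by rewrite leq_exp2l. Qed.
Lemma p2_lt a b : a < b -> 2 ^ a < 2 ^ b.
Proof. by rewrite ltn_exp2l. Qed.
Lemma p2_le_inv a b : 2 ^ a <= 2 ^ b -> a <= b.
Proof. by rewrite leq_exp2l. Qed.

Lemma count_bound j L :
  count (fun n => A0 n && (n <= 2 ^ (3 * ee j).-2)) (iota 1 L) <= 12 * uu j.
Proof.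
set e := ee j. set u := uu j. set X := 2 ^ (3 * e).-2.
have he := ee_ge1 j. fold e in he.
have hue : e < u by rewrite /u /uu -/e; exact: ltn_expl.
have hu2 : 2 <= u by rewrite /u /uu -/e; have := p2_le 1 e he; rewrite expn1.
have hu0 : 0 < u by lia.
pose a := fun n : nat => n < 4 * u.
pose b := fun n : nat => has (fun k => 2 ^ k <= n <= 2 ^ k + 2 ^ k %/ u) (index_iota 0 (2 * e).+1).
pose c := fun n : nat => has (fun k => 2 ^ k <= n <= 2 ^ k) (index_iota 0 (3 * e)).
have sub : subpred (fun n => A0 n && (n <= X)) (fun n => a n || (b n || c n)).
  move=> n /andP [/A0P hP hX].
  case: hP => [h8|[i hi]]; first by rewrite /a; apply/orP; left; lia.
  case: (ltngtP i j) => hij.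
  - have hm := ee_mono i j hij. have hi1 := ee_ge1 i. rewrite /= in hm.
    apply/orP; left; rewrite /a.
    case: hi => [/andP [_ h]|[k [hk /andP [h1 h2]]]].
      have : uu i <= u by apply: p2_le; rewrite -/e; lia.
      lia.
    have h3 : 2 ^ k %/ uu i <= 2 ^ k := leq_div _ _.
    have h4 : 2 ^ k.+1 <= 2 ^ (e.+1) by apply: p2_le; rewrite -/e; lia.
    have hu : u = 2 ^ e by []. move: h4; rewrite !expnS; lia.
  - have hm := ee_mono j i hij. rewrite /= -/e in hm.
    case: hi => [/andP [h1 _]|[k [hk /andP [h1 h2]]]].
      have : X < uu i.
        apply: (@leq_trans (2 ^ (3 * e).-1)); first by apply: p2_lt; lia.
        exact: p2_le.
      lia.
    have hXi : X < uu i.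
      apply: (@leq_trans (2 ^ (3 * e).-1)); first by apply: p2_lt; lia.
      exact: p2_le.
    have h0 : 2 ^ k %/ uu i = 0 by apply: divn_small; lia.
    rewrite h0 addn0 in h2.
    have hk2 : k <= (3 * e).-2 by apply: p2_le_inv; rewrite -/X; lia.
    apply/orP; right; apply/orP; right; apply/hasP; exists k.
      by rewrite mem_index_iota; lia.
    by apply/andP; split.
  - subst i.
    case: hi => [/andP [_ h]|[k [hk /andP [h1 h2]]]].
      by apply/orP; left; rewrite /a.
    apply/orP; right; apply/orP; left; apply/hasP; exists k.
      by rewrite mem_index_iota -/e; lia.
    by apply/andP; split.
apply: leq_trans (sub_count sub _) _.
apply: leq_trans (count_or_le _ _ _ _) _.
have ca : count a (iota 1 L) <= 4 * u by apply: count_lt_le; exact: iota_uniq.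
have cbc := count_or_le _ b c (iota 1 L).
have cb : count b (iota 1 L) <= 2 * u + (2 * e).+1.
  apply: leq_trans (count_has_le _ _ _ _) _.
  apply: (@leq_trans (\sum_(0 <= k < (2 * e).+1) (2 ^ k %/ u).+1)).
    apply: leq_sum => k _.
    apply: leq_trans (count_int_le _ _ _ (iota_uniq 1 L)) _; move: (2 ^ k) => y; move: (y %/ u) => x; lia.
  have hs := sum_win_le u ((2 * e).+1) hu0.
  have e2 : 2 ^ (2 * e).+1 = 2 * u * u by rewrite /u /uu -/e expnS -mulnA -expnD; congr (2 * 2 ^ _); lia.
  rewrite e2 in hs.
  have : (\sum_(0 <= k < (2 * e).+1) (2 ^ k %/ u).+1) * u < (2 * u + (2 * e).+1) * u by lia.
  rewrite ltn_pmul2r //; lia.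
have cc : count c (iota 1 L) <= 3 * e.
  apply: leq_trans (count_has_le _ _ _ _) _.
  apply: (@leq_trans (\sum_(0 <= k < 3 * e) 1)).
    apply: leq_sum => k _.
    apply: leq_trans (count_int_le _ _ _ (iota_uniq 1 L)) _; lia.
  by rewrite sum_nat_const_nat; lia.
lia.
Qed.


Theorem corollary3p3 :
  exists A0 : nat -> bool,
    infinite_set A0 /\ prod_sum_covers A0 /\
    exists C : R, forall M : R, exists X : R,
      (M < X)%R /\ (1 < X)%R /\
      (INR (counting A0 X) / Rpower (X * ln X) (1 / 3) <= C)%R.
Proof.
exists A0; split; first exact: A0_inf.
split; first exact: A0_cover.
exists 24%R => M.
have [N hN] := INR_unbounded M.
set j := N. set e := ee j. set u := uu j. set Xn := 2 ^ (3 * e).-2.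
have he := ee_ge1 j. fold e in he.
have hNe : N < e by exact: ee_ge.
have hXn1 : e <= Xn.
  have := ltn_expl (3 * e).-2 (isT : 1 < 2); rewrite -/Xn; lia.
have hXn2 : 2 <= Xn by have := p2_le 1 (3 * e).-2; rewrite expn1 -/Xn; apply; lia.
have hu3 : 4 * Xn = u ^ 3.
  rewrite /Xn /u /uu -/e -expnM (_ : 4 = 2 ^ 2) // -expnD; congr (2 ^ _); lia.
have hu2 : 2 <= u by rewrite /u /uu -/e; have := p2_le 1 e he; rewrite expn1.
have i1 : INR 1 = 1%R by [].
have i2 : INR 2 = 2%R by rewrite /=; lra.
have i4 : INR 4 = 4%R by rewrite /=; lra.
have i12 : INR 12 = 12%R by rewrite /=; lra.
exists (INR Xn); split; [|split].
- apply: Rlt_trans hN _; apply: lt_INR; apply/ltP; lia.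
- rewrite -i1; apply: lt_INR; apply/ltP; lia.
- set X := INR Xn.
  have cnt : counting A0 X <= 12 * u.
    apply: leq_trans (count_bound j _).
    apply: sub_count => n /andP [hA hR]; apply/andP; split => //.
    move: hR; case: Rle_dec => // hle _.
    by apply/leP; apply: INR_le.
  have cntR : (INR (counting A0 X) <= 12 * INR u)%R.
    rewrite -i12 -mult_INR; apply: le_INR; apply/leP; exact: cnt.
  set U := INR u.
  have hU2 : (2 <= U)%R by rewrite -i2; apply: le_INR; apply/leP.
  have hu3' : 4 * Xn = u * (u * u) by rewrite hu3 !expnS expn0 muln1.
  have hX : (4 * X = U ^ 3)%R.
    have := f_equal INR hu3'; rewrite -!multE !mult_INR i4 -/X -/U => ->; simpl; ring.
  have hX2 : (2 <= X)%R by rewrite -i2; apply: le_INR; apply/leP.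
  have hln : (/ 2 <= ln X)%R.
    have := ln_lt_2; case: (Rle_lt_or_eq_dec 2 X hX2) => h.
      have := ln_increasing 2 X ltac:(lra) h; lra.
    rewrite -h; lra.
  have hR : (U / 2 <= Rpower (X * ln X) (1 / 3))%R.
    have -> : (U / 2 = Rpower ((U / 2) ^ 3) (1 / 3))%R.
      rewrite -Rpower_pow; last lra.
      rewrite Rpower_mult (_ : (INR 3 * (1 / 3) = 1)%R); last by rewrite /=; field.
      by rewrite Rpower_1 //; lra.
    apply: Rle_Rpower_l; first lra.
    split; first by apply: pow_lt; lra.
    have -> : ((U / 2) ^ 3 = X / 2)%R by rewrite (_ : X = (U ^ 3 / 4)%R); [field | lra].
    nra.
  have hpos : (0 < Rpower (X * ln X) (1 / 3))%R by lra.
  apply: (Rmult_le_reg_r (Rpower (X * ln X) (1 / 3))) => //.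
  rewrite /Rdiv Rmult_assoc Rinv_l; last lra.
  change (1 * / 3)%R with (1 / 3)%R; rewrite -/U in cntR; lra.
Qed.
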